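(* Let $a,b,d>0$, $c\geq c^*=-\sqrt{3bd}$, $\phi(x)=\frac{ax^3+bx^2+cx+d}{x^3}$ ($x>0$), let $\overline{t}$ be the unique equilibrium of $\phi$, and let $\{t_n\}_{n\ge0}$ be a positive solution of $t_{n+1}=\phi(t_n)$. Let $$G(x)=a^3x^6+(2a^2b-ac-d)x^5+(ab^2-ad-bc+2a^2c)x^4+(2a^2d+2abc-c^2-bd)x^3+(ac^2+2abd-2cd)x^2+(2acd-d^2)x+ad^2$$ and suppose that $G$ has no root of even multiplicity. Then: \begin{description} \item[(a)] If $\phi$ has no 2-cycle, then $\{t_n\}$ converges to $\overline{t}$. \item[(b)] If $\phi$ has one 2-cycle $(p,q)$ with $p<\overline{t}<q$, then $\{t_n\}$ converges to the 2-cycle $(p,q)$ if $t_0\neq\overline{t}$; otherwise $\{t_n\}$ converges to $\overline{t}$. \item[(c)] If $\phi$ has two 2-cycles $(p_1,q_1)$, $(p_2,q_2)$ with $p_1<p_2<\overline{t}<q_2<q_1$, then $\{t_n\}$ converges to $\overline{t}$ if $t_0\in(p_2,q_2)$, converges to the 2-cycle $(p_2,q_2)$ if $t_0\in\{p_2,q_2\}$, and otherwise converges to the 2-cycle $(p_1,q_1)$. \item[(d)] If $\phi$ has three 2-cycles $(p_1,q_1)$, $(p_2,q_2)$, $(p_3,q_3)$ with $p_1<p_2<p_3<\overline{t}<q_3<q_2<q_1$, then $\{t_n\}$ converges to the 2-cycle $(p_3,q_3)$ if $t_0\in(p_2,q_2)\setminus\{\overline{t}\}$, converges to $\overline{t}$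 if $t_0=\overline{t}$, converges to the 2-cycle $(p_2,q_2)$ if $t_0\in\{p_2,q_2\}$, and otherwise converges to the 2-cycle $(p_1,q_1)$. \end{description}
   Context: An equilibrium is $t>0$ with $\phi(t)=t$. A 2-cycle is a pair $(p,q)$ of positive numbers with $p\ne q$, $\phi(p)=q$, $\phi(q)=p$. A positive solution is a sequence with $t_0>0$ and $t_{n+1}=\phi(t_n)$. The sequence $\{t_n\}$ converges to the 2-cycle $(p,q)$ if one of the subsequences $\{t_{2n}\}$, $\{t_{2n+1}\}$ converges to $p$ and the other to $q$. *)

(* Defs.v *)
From HB Require Import structures.
From mathcomp Require Import all_boot all_order all_algebra.
From mathcomp Require Import all_classical all_reals all_analysis.
Set Implicit Arguments. Unset Strict Implicit. Unset Printing Implicit Defensive.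
Import Order.TTheory GRing.Theory Num.Theory numFieldNormedType.Exports.
Local Open Scope classical_set_scope.
Local Open Scope ring_scope.

Section Defs.
Variable R : realType.

Definition phi (a b c d x : R) : R :=
  (a * x ^+ 3 + b * x ^+ 2 + c * x + d) / x ^+ 3.

(* the polynomial G, coefficients listed from degree 0 to degree 6 *)
Definition Gpoly (a b c d : R) : {poly R} :=
  Poly [:: a * d ^+ 2;
           2 * a * c * d - d ^+ 2;
           a * c ^+ 2 + 2 * a * b * d - 2 * c * d;
           2 * a ^+ 2 * d + 2 * a * b * c - c ^+ 2 - b * d;
           a * b ^+ 2 - a * d - b * c + 2 * a ^+ 2 * c;
           2 * a ^+ 2 * b - a * c - d;
           a ^+ 3].

Definition no_even_mult_root (G : {poly R}) : Prop :=
  forall x : R, root G x -> odd (mup x G).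

Definition equilibrium (f : R -> R) (x : R) : Prop := 0 < x /\ f x = x.

Definition two_cycle (f : R -> R) (p q : R) : Prop :=
  0 < p /\ 0 < q /\ p <> q /\ f p = q /\ f q = p.

(* (x,y) is the same 2-cycle as (p,q) (cycles are unordered pairs) *)
Definition same_cycle (p q x y : R) : Prop :=
  (x = p /\ y = q) \/ (x = q /\ y = p).

Definition conv_cycle (u : nat -> R) (p q : R) : Prop :=
  ((fun n => u (2 * n)%N) @ \oo --> p /\ (fun n => u (2 * n).+1) @ \oo --> q)
  \/ ((fun n => u (2 * n)%N) @ \oo --> q /\ (fun n => u (2 * n).+1) @ \oo --> p).

End Defs.

(* Main.v *)
Require Import Defs.
From HB Require Import structures.
From mathcomp Require Import all_boot all_order all_algebra.
From mathcomp Require Import all_classical all_reals all_analysis.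
From mathcomp Require Import polyrcf.
From mathcomp Require Import ring lra zify.
Import Order.TTheory GRing.Theory Num.Theory numFieldNormedType.Exports.
Local Open Scope classical_set_scope.
Local Open Scope ring_scope.
Set Implicit Arguments. Unset Strict Implicit. Unset Printing Implicit Defensive.
Definition Kp (R : realType) (a b c d : R) : {poly R} := Poly [:: d; c; b; a; -1].
Definition Sp (R : realType) (a b c d : R) : {poly R} := Kp a b c d * Gpoly a b c d.
Definition num (R : realType) (a b c d x : R) : R := a * x ^+ 3 + b * x ^+ 2 + c * x + d.

Lemma hc2 (R : realType) (b c d : R) : 0 < b -> 0 < d -> - Num.sqrt (3 * b * d) <= c ->
  0 <= c \/ c ^+ 2 <= 3 * b * d.
Proof.
move=> hb hd hc; have [c0|c0] := lerP 0 c; first by left.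
right; have h3 : 0 <= 3 * b * d by apply: mulr_ge0; [apply: mulr_ge0|]; lra.
have := sqr_sqrtr h3; set s := Num.sqrt _ => hs.
have s0 : 0 <= s by apply: sqrtr_ge0.
have hcs : - c <= s by move: hc; rewrite /s; lra.
rewrite -hs expr2 -mulrNN expr2; apply: ler_pM; lra.
Qed.

Lemma quad_pos (R : realType) (b c d x : R) : 0 < b -> 0 < d -> 0 < x ->
  (0 <= c \/ c ^+ 2 <= 3 * b * d) -> 0 < b * x ^+ 2 + c * x + d.
Proof.
move=> hb hd hx [hc|hc].
  have h1 : 0 <= c * x by apply: mulr_ge0; lra.
  have h2 : 0 < b * x ^+ 2 by apply: mulr_gt0 => //; apply: exprn_gt0.
  lra.
have h : 0 < 4 * b * (b * x ^+ 2 + c * x + d).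
  have -> : 4 * b * (b * x ^+ 2 + c * x + d) = (2 * b * x + c) ^+ 2 + (4 * b * d - c ^+ 2) by ring.
  have := sqr_ge0 (2 * b * x + c); nra.
have h4 : 0 < 4 * b by lra.
by rewrite -(pmulr_rgt0 _ h4).
Qed.

Lemma num_gt (R : realType) (a b c d x : R) : 0 < a -> 0 < b -> 0 < d -> 0 < x ->
  (0 <= c \/ c ^+ 2 <= 3 * b * d) -> a * x ^+ 3 < num a b c d x.
Proof.
move=> ha hb hd hx hc; rewrite /num.
have := quad_pos hb hd hx hc; nra.
Qed.

Lemma phi_num (R : realType) (a b c d x : R) : phi a b c d x = num a b c d x / x ^+ 3.
Proof. by []. Qed.

Lemma phi_gt (R : realType) (a b c d x : R) : 0 < a -> 0 < b -> 0 < d -> 0 < x ->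
  (0 <= c \/ c ^+ 2 <= 3 * b * d) -> a < phi a b c d x.
Proof.
move=> ha hb hd hx hc; rewrite phi_num ltr_pdivlMr; last exact: exprn_gt0.
exact: num_gt.
Qed.

Lemma phi_decr (R : realType) (a b c d x y : R) : 0 < a -> 0 < b -> 0 < d -> 0 < x ->
  (0 <= c \/ c ^+ 2 <= 3 * b * d) -> x < y -> phi a b c d y < phi a b c d x.
Proof.
move=> ha hb hd hx hc xy.
have hy : 0 < y by lra.
have e : phi a b c d x - phi a b c d y =
   (y - x) * (b * (x*y)^+2 + c * (x*y) * (x+y) + d * (x^+2 + x*y + y^+2)) / (x^+3 * y^+3).
  have hx0 : x != 0 by rewrite gt_eqF.
  have hy0 : y != 0 by rewrite gt_eqF.
  rewrite !phi_num /num; field; by rewrite hx0 hy0.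
suff : 0 < phi a b c d x - phi a b c d y by lra.
rewrite e; apply: divr_gt0; last by apply: mulr_gt0; apply: exprn_gt0.
apply: mulr_gt0; first lra.
set P := x * y; set S := x + y.
have hP : 0 < P by rewrite /P; nra.
have e2 : x^+2 + x*y + y^+2 = S^+2 - P by rewrite /S /P; ring.
rewrite e2.
have hPS : 4 * P < S^+2 by rewrite /S /P; nra.
case: hc => hc.
  have hS : 0 < S by rewrite /S; lra.
  have h1 : 0 < b * P ^+ 2 by apply: mulr_gt0 => //; apply: exprn_gt0.
  have h2 : 0 <= c * P * S by apply: mulr_ge0; [apply: mulr_ge0|]; lra.
  have h3 : 0 < d * (S ^+ 2 - P) by apply: mulr_gt0 => //; lra.
  lra.
have : 0 <= 3 * d * (b * P ^+ 2 + c * P * S + 3/4 * d * S ^+2).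
  have -> : 3 * d * (b * P ^+ 2 + c * P * S + 3/4 * d * S ^+2) =
     (3/2 * d * S + c * P) ^+ 2 + (3 * b * d - c ^+ 2) * P ^+ 2 by field.
  apply: addr_ge0; first exact: sqr_ge0.
  apply: mulr_ge0; [lra|exact: sqr_ge0].
move=> h.
have h' : 0 <= b * P ^+ 2 + c * P * S + 3/4 * d * S ^+2.
  have h3d : 0 < 3 * d by lra.
  rewrite -(pmulr_rge0 _ h3d); exact: h.
have h4 : 0 < d * (S ^+ 2 - P) - 3/4 * d * S^+2.
  have -> : d * (S ^+ 2 - P) - 3/4 * d * S^+2 = d * (S^+2 / 4 - P) by field.
  apply: mulr_gt0 => //; lra.
lra.
Qed.

Lemma ff_identity (R : realType) (a b c d x : R) : 0 < x -> num a b c d x != 0 ->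
  phi a b c d (phi a b c d x) - x = (Sp a b c d).[x] / (num a b c d x) ^+ 3.
Proof.
move=> hx hn; rewrite /Sp hornerM /Kp /Gpoly !horner_Poly /=.
rewrite !phi_num /num in hn *.
have hx0 : x != 0 by rewrite gt_eqF.
by field; rewrite hn hx0.
Qed.

Definition HYP (R : realType) (a b c d : R) :=
  [/\ 0 < a, 0 < b, 0 < d & (0 <= c \/ c ^+ 2 <= 3 * b * d)].

Lemma num_pos (R : realType) (a b c d x : R) : HYP a b c d -> 0 < x -> 0 < num a b c d x.
Proof.
case=> ha hb hd hc hx; have := num_gt ha hb hd hx hc.
have : 0 < a * x ^+ 3 by apply: mulr_gt0 => //; apply: exprn_gt0.
lra.
Qed.

Lemma phi_pos (R : realType) (a b c d x : R) : HYP a b c d -> 0 < x -> 0 < phi a b c d x.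
Proof. case=> ha hb hd hc hx; have := phi_gt ha hb hd hx hc; lra. Qed.

Lemma phi_lt (R : realType) (a b c d x y : R) : HYP a b c d -> 0 < x -> x < y ->
  phi a b c d y < phi a b c d x.
Proof. by case=> ha hb hd hc hx; apply: phi_decr. Qed.

Lemma phi_le (R : realType) (a b c d x y : R) : HYP a b c d -> 0 < x -> x <= y ->
  phi a b c d y <= phi a b c d x.
Proof.
move=> H hx; rewrite le_eqVlt => /orP[/eqP->//|xy].
by apply/ltW/phi_lt.
Qed.

Lemma ff_le (R : realType) (a b c d x y : R) : HYP a b c d -> 0 < x -> x <= y ->
  phi a b c d (phi a b c d x) <= phi a b c d (phi a b c d y).
Proof.
move=> H hx xy; apply: phi_le => //; first by apply: phi_pos => //; lra.
by apply: phi_le.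
Qed.

Lemma S_eq (R : realType) (a b c d x : R) : HYP a b c d -> 0 < x ->
  (Sp a b c d).[x] = (phi a b c d (phi a b c d x) - x) * (num a b c d x) ^+ 3.
Proof.
move=> H hx; have hn := num_pos H hx.
rewrite ff_identity //; last by rewrite gt_eqF.
rewrite mulrVK //; rewrite unitfE expf_neq0 // gt_eqF //.
Qed.

Lemma lt_ff (R : realType) (a b c d x : R) : HYP a b c d -> 0 < x ->
  (x < phi a b c d (phi a b c d x)) = (0 < (Sp a b c d).[x]).
Proof.
move=> H hx; rewrite S_eq // pmulr_lgt0 ?subr_gt0 //.
by apply: exprn_gt0; apply: num_pos.
Qed.

Lemma gt_ff (R : realType) (a b c d x : R) : HYP a b c d -> 0 < x ->
  (phi a b c d (phi a b c d x) < x) = ((Sp a b c d).[x] < 0).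
Proof.
move=> H hx; rewrite S_eq // pmulr_llt0 ?subr_lt0 //.
by apply: exprn_gt0; apply: num_pos.
Qed.

Lemma eq_ff (R : realType) (a b c d x : R) : HYP a b c d -> 0 < x ->
  (phi a b c d (phi a b c d x) == x) = ((Sp a b c d).[x] == 0).
Proof.
move=> H hx; rewrite S_eq // mulf_eq0 expf_eq0 /= (gt_eqF (num_pos H hx)) orbF.
by rewrite subr_eq0.
Qed.

Lemma sym_sg (R : realType) (a b c d x : R) : HYP a b c d -> 0 < x ->
  Num.sg (Sp a b c d).[phi a b c d x] = - Num.sg (Sp a b c d).[x].
Proof.
move=> H hx; set y := phi a b c d x.
have hy : 0 < y by apply: phi_pos.
have hfx : 0 < phi a b c d (phi a b c d x) by apply: phi_pos => //; apply: phi_pos.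
case: (ltgtP (phi a b c d (phi a b c d x)) x) => h.
- have h1 : (Sp a b c d).[x] < 0 by rewrite -gt_ff.
  have h2 : 0 < (Sp a b c d).[y].
    by rewrite -lt_ff //; apply: phi_lt.
  by rewrite (ltr0_sg h1) (gtr0_sg h2) opprK.
- have h1 : 0 < (Sp a b c d).[x] by rewrite -lt_ff.
  have h2 : (Sp a b c d).[y] < 0.
    by rewrite -gt_ff //; apply: phi_lt.
  by rewrite (ltr0_sg h2) (gtr0_sg h1).
- have h1 : (Sp a b c d).[x] == 0 by rewrite -eq_ff // h.
  have h2 : (Sp a b c d).[y] == 0 by rewrite -eq_ff // /y h.
  by rewrite (eqP h1) (eqP h2) sgr0 oppr0.
Qed.

Lemma const_sg (R : realType) (a b c d l r x y : R) :
  (forall w, l < w < r -> (Sp a b c d).[w] != 0) -> l < x < r -> l < y < r ->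
  Num.sg (Sp a b c d).[x] = Num.sg (Sp a b c d).[y].
Proof.
move=> hn hx hy.
have hi : {in `]l, r[, forall w, ~~ root (Sp a b c d) w}.
  by move=> w; rewrite in_itv /= => hw; rewrite /root; apply: hn.
by apply: (polyrN0_itv hi); rewrite in_itv /=.
Qed.

Lemma Kp_eq (R : realType) (a b c d x : R) : x != 0 ->
  (Kp a b c d).[x] = x ^+ 3 * (phi a b c d x - x).
Proof.
move=> hx; rewrite /Kp horner_Poly /= phi_num /num; field; exact: hx.
Qed.

Lemma G_neq0 (R : realType) (a b c d : R) : 0 < a -> Gpoly a b c d != 0.
Proof.
move=> ha; apply/eqP => h.
have : (Gpoly a b c d)`_6 = a ^+ 3 by rewrite coef_Poly.
rewrite h coef0 => /eqP; rewrite eq_sym expf_eq0 /= gt_eqF //.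
Qed.

Lemma change_sg (R : realType) (a b c d z l r x y : R) : HYP a b c d ->
  no_even_mult_root (Gpoly a b c d) ->
  0 < z -> phi a b c d z != z -> phi a b c d (phi a b c d z) = z ->
  (forall w, l < w < r -> w != z -> (Sp a b c d).[w] != 0) ->
  l < x -> x < z -> z < y -> y < r ->
  Num.sg (Sp a b c d).[x] = - Num.sg (Sp a b c d).[y].
Proof.
move=> H hG hz hpz hfz hn lx xz zy yr.
set G := Gpoly a b c d; set K := Kp a b c d.
have Kz : K.[z] != 0.
  have z0 : z != 0 by rewrite gt_eqF.
  rewrite /K (Kp_eq _ _ _ _ z0) mulf_neq0 // ?expf_neq0 // subr_eq0 //.
have Sz : (Sp a b c d).[z] == 0 by rewrite -eq_ff // hfz.
have Gz : root G z.
  by move: Sz; rewrite /Sp hornerM mulf_eq0 (negPf Kz) /=.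
have G0 : G != 0 by apply: G_neq0; case: H.
set m := mup z G.
have hm : odd m := hG z Gz.
have dv : ('X - z%:P) ^+ m %| G by rewrite -mup_geq.
set Q := G %/ ('X - z%:P) ^+ m.
have hQ : Q * ('X - z%:P) ^+ m = G by rewrite /Q divpK.
have Qz : ~~ root Q z.
  apply/negP => rQ.
  have : ('X - z%:P) ^+ m.+1 %| G.
    by rewrite exprS -hQ dvdp_mul // dvdp_XsubCl.
  by rewrite -mup_geq // ltnn.
have Sw : forall w, (Sp a b c d).[w] = (K * Q).[w] * (w - z) ^+ m.
  by move=> w; rewrite /Sp -/K -/G -hQ mulrA hornerM horner_exp hornerXsubC.
have hi : {in `]l, r[, forall w, ~~ root (K * Q) w}.
  move=> w; rewrite in_itv /= => hw; rewrite /root.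
  have [->|wz] := eqVneq w z.
    by rewrite hornerM mulf_eq0 negb_or Kz.
  apply/negP => /eqP h0; move: (hn w hw wz); rewrite Sw h0 mul0r eqxx //.
have e := polyrN0_itv hi (x:=x) (y:=y).
rewrite in_itv /= lx /= in e; rewrite in_itv /= yr andbT in e.
have e' := e (lt_trans xz (lt_trans zy yr)) (lt_trans lx (lt_trans xz zy)).
rewrite !Sw !sgrM e'.
have hx : (x - z) ^+ m < 0 by rewrite exprn_odd_lt0 // subr_lt0.
have hy : 0 < (y - z) ^+ m by apply: exprn_gt0; rewrite subr_gt0.
by rewrite (ltr0_sg hx) (gtr0_sg hy) mulrN1 mulr1.
Qed.

Lemma phi_cvg (R : realType) (a b c d l : R) (v : nat -> R) : 0 < l ->
  v @ \oo --> l -> (fun n => phi a b c d (v n)) @ \oo --> phi a b c d l.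
Proof.
move=> hl hv.
have e : forall x, phi a b c d x =
   (Poly [:: d; c; b; a]).[x] * (('X^3 : {poly R}).[x])^-1.
  by move=> x; rewrite horner_Poly hornerXn phi_num /num /=; congr (_ / _); ring.
rewrite e (_ : (fun n => phi a b c d (v n)) =
   ((fun n => (Poly [:: d; c; b; a]).[v n]) \* (fun n => (('X^3 : {poly R}).[v n])^-1)));
  last by apply: funext => n; rewrite e.
apply: cvgM.
  exact: (continuous_cvg _ (@continuous_horner _ _ l) hv).
have h3 : ('X^3 : {poly R}).[l] != 0 by rewrite hornerXn expf_neq0 // gt_eqF.
exact: (cvgV h3 (continuous_cvg _ (@continuous_horner _ _ l) hv)).
Qed.

Lemma cvg_bounds (R : realType) (u : nat -> R) (lo hi l : R) :
  (forall n, lo <= u n <= hi) -> u @ \oo --> l -> lo <= l <= hi.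
Proof.
move=> hb hu; have cu : cvgn u by apply/cvg_ex; exists l.
rewrite -(cvg_lim _ hu) //; apply/andP; split.
  by apply: limr_ge => //; near=> n; have /andP[] := hb n.
by apply: limr_le => //; near=> n; have /andP[] := hb n.
Unshelve. all: by end_near.
Qed.

Lemma mono_lim (R : realType) (u : nat -> R) (lo hi : R) :
  (forall n, lo <= u n <= hi) ->
  ((forall n, u n <= u n.+1) \/ (forall n, u n.+1 <= u n)) ->
  exists l, lo <= l <= hi /\ u @ \oo --> l.
Proof.
move=> hb [hm|hm].
  have hu : u @ \oo --> sup (range u).
    apply: nondecreasing_cvgn; first by apply/nondecreasing_seqP.
    by exists hi => _ [n _ <-]; have /andP[] := hb n.
  by exists (sup (range u)); split => //; apply: (cvg_bounds hb hu).
have hu : u @ \oo --> inf (u @` setT).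
  apply: nonincreasing_cvgn; first by apply/nonincreasing_seqP.
  by exists lo => _ [n _ <-]; have /andP[] := hb n.
by exists (inf (u @` setT)); split => //; apply: (cvg_bounds hb hu).
Qed.

Lemma fix_lim (R : realType) (a b c d l : R) (u : nat -> R) : HYP a b c d -> 0 < l ->
  (forall n, 0 < u n) ->
  (forall n, u n.+1 = phi a b c d (phi a b c d (u n))) ->
  u @ \oo --> l -> phi a b c d (phi a b c d l) = l.
Proof.
move=> H hl hp hr hu.
have h1 : (fun n => u n.+1) @ \oo --> l by rewrite (cvg_shiftS u).
have h2 : (fun n => u n.+1) @ \oo --> phi a b c d (phi a b c d l).
  rewrite (_ : (fun n => u n.+1) = (fun n => phi a b c d (phi a b c d (u n))));
    last by apply: funext => n; rewrite hr.
  apply: phi_cvg; last exact: phi_cvg.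
  exact: phi_pos.
exact: (cvg_unique _ h2 h1).
Qed.

Lemma goto (R : realType) (a b c d l0 r L : R) (u : nat -> R) : HYP a b c d ->
  0 <= l0 -> l0 < u 0%N -> u 0%N < r -> l0 < L -> L < r ->
  phi a b c d (phi a b c d L) = L ->
  (forall x, l0 < x < L -> 0 < (Sp a b c d).[x]) ->
  (forall x, L < x < r -> (Sp a b c d).[x] < 0) ->
  (forall n, u n.+1 = phi a b c d (phi a b c d (u n))) ->
  u @ \oo --> L.
Proof.
move=> H l0p l0u ur l0L Lr fL hpos hneg hr.
have hL : 0 < L by lra.
have [x0L|Lx0] := lerP (u 0%N) L.
  have inv : forall n, u 0%N <= u n <= L /\ u n <= u n.+1.
    elim=> [|n [/andP[h1 h2] h3]].
      split; first by rewrite lexx x0L.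
      have [e|lt] := eqVneq (u 0%N) L.
        by rewrite hr e fL.
      rewrite hr; apply: ltW; rewrite (lt_ff H); last lra.
      have h5 : u 0%N < L by rewrite lt_neqAle lt x0L.
      by apply: hpos; apply/andP; split; lra.
    have h4 : u n.+1 <= L.
      rewrite hr -fL; apply: ff_le => //; lra.
    split; first by rewrite h4 (le_trans h1 h3).
    have [e|lt] := eqVneq (u n.+1) L.
      by rewrite [u n.+2]hr e fL.
    rewrite [u n.+2]hr; apply: ltW; rewrite (lt_ff H); last lra.
    have h5 : u n.+1 < L by rewrite lt_neqAle lt h4.
    by apply: hpos; apply/andP; split; lra.
  have [l [/andP[hl1 hl2] hul]] : exists l, u 0%N <= l <= L /\ u @ \oo --> l.
    apply: (mono_lim (fun n => proj1 (inv n))); left => n; exact: proj2 (inv n).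
  have fl : phi a b c d (phi a b c d l) = l.
    apply: (fix_lim H _ _ hr hul); first lra.
    move=> n; have /andP[h1 _] := proj1 (inv n); lra.
  have [e|lt] := eqVneq l L; first by rewrite -e.
  have h5 : l < L by rewrite lt_neqAle lt hl2.
  have : 0 < (Sp a b c d).[l] by apply: hpos; apply/andP; split; lra.
  rewrite -(lt_ff H); last lra.
  by rewrite fl ltxx.
have inv : forall n, L <= u n <= u 0%N /\ u n.+1 <= u n.
  elim=> [|n [/andP[h1 h2] h3]].
    split; first by rewrite lexx (ltW Lx0).
    rewrite hr; apply: ltW; rewrite (gt_ff H); last lra.
    by apply: hneg; rewrite Lx0 ur.
  have h4 : L <= u n.+1.
    rewrite hr -fL; apply: ff_le => //; lra.
  split; first by rewrite h4 (le_trans h3 h2).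
  have [e|lt] := eqVneq (u n.+1) L.
    by rewrite [u n.+2]hr e fL.
  rewrite [u n.+2]hr; apply: ltW; rewrite (gt_ff H); last lra.
  have h5 : L < u n.+1 by rewrite lt_neqAle eq_sym lt h4.
  apply: hneg; apply/andP; split; lra.
have [l [/andP[hl1 hl2] hul]] : exists l, L <= l <= u 0%N /\ u @ \oo --> l.
  apply: (mono_lim (fun n => proj1 (inv n))); right => n; exact: proj2 (inv n).
have fl : phi a b c d (phi a b c d l) = l.
  apply: (fix_lim H _ _ hr hul); first lra.
  move=> n; have /andP[h1 _] := proj1 (inv n); lra.
have [e|lt] := eqVneq l L; first by rewrite -e.
have : (Sp a b c d).[l] < 0.
  have h5 : L < l by rewrite lt_neqAle eq_sym lt hl1.
  apply: hneg; apply/andP; split; lra.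
rewrite -(gt_ff H); last lra.
by rewrite fl ltxx.
Qed.

Lemma seed (R : realType) (a b c d m y : R) : HYP a b c d -> 0 <= m ->
  (forall w, m < w -> (Sp a b c d).[w] != 0) -> m < y -> (Sp a b c d).[y] < 0.
Proof.
move=> H hm hn my.
have ha : 0 < a by case: H.
set z := y + phi a b c d a.
have hpa : 0 < phi a b c d a by apply: phi_pos.
have hz : 0 < z by rewrite /z; lra.
have hSz : (Sp a b c d).[z] < 0.
  rewrite -(gt_ff H hz).
  have h1 : a < phi a b c d z by case: H => ???? ; apply: phi_gt.
  have := phi_lt H ha h1; rewrite /z; lra.
have e := @const_sg R a b c d m (z + 1) y z.
rewrite -sgr_lt0 e ?sgr_lt0 //.
- by move=> w /andP[h1 _]; apply: hn.
- by apply/andP; split; rewrite /z; lra.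
- by apply/andP; split; rewrite /z; lra.
Qed.

Lemma sym_np (R : realType) (a b c d y : R) : HYP a b c d -> 0 < y ->
  (Sp a b c d).[phi a b c d y] < 0 -> 0 < (Sp a b c d).[y].
Proof.
move=> H hy h; have e := sym_sg H hy; rewrite (ltr0_sg h) in e.
have : Num.sg (Sp a b c d).[y] == 1 by rewrite -[Num.sg _]opprK -e opprK.
by rewrite sgr_cp0.
Qed.

Lemma sym_pn (R : realType) (a b c d y : R) : HYP a b c d -> 0 < y ->
  0 < (Sp a b c d).[phi a b c d y] -> (Sp a b c d).[y] < 0.
Proof.
move=> H hy h; have e := sym_sg H hy; rewrite (gtr0_sg h) in e.
have : Num.sg (Sp a b c d).[y] == -1 by rewrite -[Num.sg _]opprK -e.
by rewrite sgr_cp0.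
Qed.

Lemma change_pn (R : realType) (a b c d z l r : R) : HYP a b c d ->
  no_even_mult_root (Gpoly a b c d) ->
  0 < z -> phi a b c d z != z -> phi a b c d (phi a b c d z) = z ->
  (forall w, l < w < r -> w != z -> (Sp a b c d).[w] != 0) -> l < z -> z < r ->
  ((forall x, l < x < z -> 0 < (Sp a b c d).[x]) -> forall y, z < y < r -> (Sp a b c d).[y] < 0)
  /\ ((forall x, l < x < z -> (Sp a b c d).[x] < 0) -> forall y, z < y < r -> 0 < (Sp a b c d).[y]).
Proof.
move=> H hG hz hpz hfz hn lz zr.
have hx : l < (l + z) / 2 < z by apply/andP; split; lra.
split=> hs y /andP[zy yr].
  have e := change_sg H hG hz hpz hfz hn (x := (l+z)/2) (y := y) ltac:(lra) ltac:(lra) zy yr.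
  rewrite (gtr0_sg (hs _ hx)) in e.
  have : Num.sg (Sp a b c d).[y] == -1 by rewrite -[Num.sg _]opprK -e.
  by rewrite sgr_cp0.
have e := change_sg H hG hz hpz hfz hn (x := (l+z)/2) (y := y) ltac:(lra) ltac:(lra) zy yr.
rewrite (ltr0_sg (hs _ hx)) in e.
have : Num.sg (Sp a b c d).[y] == 1 by rewrite -[Num.sg _]opprK -e opprK.
by rewrite sgr_cp0.
Qed.

Lemma zero_char (R : realType) (a b c d tbar w : R) : HYP a b c d ->
  equilibrium (phi a b c d) tbar -> 0 < w -> (Sp a b c d).[w] == 0 ->
  w = tbar \/ two_cycle (phi a b c d) w (phi a b c d w).
Proof.
move=> H [ht htf] hw; rewrite -(eq_ff H hw) => /eqP hf.
have [e|ne] := eqVneq (phi a b c d w) w.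
  left; case: (ltgtP w tbar) => // h.
    have := phi_lt H hw h; lra.
  have := phi_lt H ht h; lra.
right; split => //; split; first exact: phi_pos.
by split => //; apply/eqP; rewrite eq_sym.
Qed.

Lemma pos_t (R : realType) (a b c d : R) (t : nat -> R) : HYP a b c d ->
  0 < t 0%N -> (forall n, t n.+1 = phi a b c d (t n)) -> forall n, 0 < t n.
Proof. by move=> H h0 hr; elim=> // n IH; rewrite hr; apply: phi_pos. Qed.

Lemma even_rec (R : realType) (a b c d : R) (t : nat -> R) :
  (forall n, t n.+1 = phi a b c d (t n)) ->
  forall n, t (2 * n.+1)%N = phi a b c d (phi a b c d (t (2 * n)%N)).
Proof. by move=> hr n; rewrite mulnS add2n !hr. Qed.

Lemma odd_cvg (R : realType) (a b c d z : R) (t : nat -> R) :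
  (forall n, t n.+1 = phi a b c d (t n)) -> 0 < z ->
  (fun n => t (2 * n)%N) @ \oo --> z ->
  (fun n => t (2 * n).+1) @ \oo --> phi a b c d z.
Proof.
move=> hr hz he.
rewrite (_ : (fun n => t (2 * n).+1) = (fun n => phi a b c d (t (2 * n)%N))).
  exact: phi_cvg.
by apply: funext => n; rewrite hr.
Qed.

Lemma evenodd_cvg (R : realType) (t : nat -> R) (l : R) :
  (fun n => t (2 * n)%N) @ \oo --> l -> (fun n => t (2 * n).+1) @ \oo --> l ->
  t @ \oo --> l.
Proof.
move=> he ho; apply/cvgrPdist_lt => e e0.
move/cvgrPdist_lt: he => /(_ e e0) [N1 _ H1].
move/cvgrPdist_lt: ho => /(_ e e0) [N2 _ H2].
exists (2 * (N1 + N2))%N => // n /= hn.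
have hk := odd_double_half n; rewrite -addnn in hk.
case hon : (odd n) in hk.
  have -> : n = (2 * n./2).+1 by lia.
  apply: H2 => /=; lia.
have -> : n = (2 * n./2)%N by lia.
apply: H1 => /=; lia.
Qed.

Lemma const_cvg (R : realType) (a b c d L : R) (u : nat -> R) :
  u 0%N = L -> phi a b c d (phi a b c d L) = L ->
  (forall n, u n.+1 = phi a b c d (phi a b c d (u n))) -> u @ \oo --> L.
Proof.
move=> h0 fL hr.
have -> : u = (fun=> L) by apply: funext; elim=> // n IH; rewrite hr IH fL.
exact: cvg_cst.
Qed.

Lemma even_goto (R : realType) (a b c d l0 r L : R) (t : nat -> R) : HYP a b c d ->
  (forall n, t n.+1 = phi a b c d (t n)) ->
  0 <= l0 -> l0 < t 0%N -> t 0%N < r -> l0 < L -> L < r ->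
  phi a b c d (phi a b c d L) = L ->
  (forall x, l0 < x < L -> 0 < (Sp a b c d).[x]) ->
  (forall x, L < x < r -> (Sp a b c d).[x] < 0) ->
  (fun n => t (2 * n)%N) @ \oo --> L.
Proof.
move=> H hr l0p l0t tr l0L Lr fL hp hn.
apply: (goto (u := fun n => t (2 * n)%N) H l0p l0t tr l0L Lr fL hp hn).
exact: even_rec.
Qed.

Lemma even_const (R : realType) (a b c d L : R) (t : nat -> R) :
  (forall n, t n.+1 = phi a b c d (t n)) -> t 0%N = L ->
  phi a b c d (phi a b c d L) = L ->
  (fun n => t (2 * n)%N) @ \oo --> L.
Proof.
move=> hr h0 fL; apply: (const_cvg (u := fun n => t (2 * n)%N) h0 fL).
exact: even_rec.
Qed.

Lemma conv_l (R : realType) (a b c d p q : R) (t : nat -> R) :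
  (forall n, t n.+1 = phi a b c d (t n)) -> 0 < p -> phi a b c d p = q ->
  (fun n => t (2 * n)%N) @ \oo --> p -> conv_cycle t p q.
Proof. move=> hr hp e he; left; split => //; rewrite -e; exact: odd_cvg. Qed.

Lemma conv_r (R : realType) (a b c d p q : R) (t : nat -> R) :
  (forall n, t n.+1 = phi a b c d (t n)) -> 0 < q -> phi a b c d q = p ->
  (fun n => t (2 * n)%N) @ \oo --> q -> conv_cycle t p q.
Proof. move=> hr hp e he; right; split => //; rewrite -e; exact: odd_cvg. Qed.

Lemma conv_fix (R : realType) (a b c d z : R) (t : nat -> R) :
  (forall n, t n.+1 = phi a b c d (t n)) -> 0 < z -> phi a b c d z = z ->
  (fun n => t (2 * n)%N) @ \oo --> z -> t @ \oo --> z.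
Proof.
move=> hr hz e he; apply: evenodd_cvg => //; have := odd_cvg hr hz he; by rewrite e.
Qed.

Lemma cyc_facts (R : realType) (a b c d p q : R) :
  two_cycle (phi a b c d) p q ->
  [/\ 0 < p, 0 < q, phi a b c d p = q, phi a b c d q = p &
   [/\ phi a b c d p != p, phi a b c d q != q,
       phi a b c d (phi a b c d p) = p & phi a b c d (phi a b c d q) = q]].
Proof.
move=> [hp [hq [ne [e1 e2]]]]; split => //; split.
- by rewrite e1; apply/eqP => h; apply: ne.
- by rewrite e2; apply/eqP.
- by rewrite e1 e2.
- by rewrite e2 e1.
Qed.

Lemma caseA (R : realType) (a b c d tbar : R) (t : nat -> R) : HYP a b c d ->
  equilibrium (phi a b c d) tbar -> 0 < t 0%N -> (forall n, t n.+1 = phi a b c d (t n)) ->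
  (forall p q, ~ two_cycle (phi a b c d) p q) -> t @ \oo --> tbar.
Proof.
move=> H [ht htf] h0 hr hno.
have Z : forall w, 0 < w -> (Sp a b c d).[w] == 0 -> w = tbar.
  by move=> w hw hS; case: (zero_char H (conj ht htf) hw hS) => // /hno.
have neg : forall y, tbar < y -> (Sp a b c d).[y] < 0.
  move=> y hy; apply: (seed H (ltW ht) _ hy) => w hw.
  apply/negP => /(Z w ltac:(lra)); lra.
have pos : forall x, 0 < x < tbar -> 0 < (Sp a b c d).[x].
  move=> x /andP[x0 xt]; apply: sym_np => //; apply: neg.
  by rewrite -{1}htf; apply: phi_lt.
apply: conv_fix => //.
apply: (even_goto (l0 := 0) (r := t 0%N + tbar + 1) H hr) => //; try lra.
  by rewrite !htf.
by move=> x /andP[h _]; apply: neg.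
Qed.

Lemma caseB (R : realType) (a b c d tbar : R) (t : nat -> R) : HYP a b c d ->
  no_even_mult_root (Gpoly a b c d) ->
  equilibrium (phi a b c d) tbar -> 0 < t 0%N -> (forall n, t n.+1 = phi a b c d (t n)) ->
  forall p q, p < tbar < q ->
      (forall x y, two_cycle (phi a b c d) x y <-> same_cycle p q x y) ->
      (t 0%N <> tbar -> conv_cycle t p q) /\ (t 0%N = tbar -> t @ \oo --> tbar).
Proof.
move=> H hG [ht htf] h0 hr p q /andP[pt tq] hiff.
have cpq : two_cycle (phi a b c d) p q by apply/hiff; left.
have [hp hq e1 e2 [n1 n2 f1 f2]] := cyc_facts cpq.
have ftb : phi a b c d (phi a b c d tbar) = tbar by rewrite !htf.
have Z : forall w, 0 < w -> (Sp a b c d).[w] == 0 -> [\/ w = tbar, w = p | w = q].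
  move=> w hw hS; case: (zero_char H (conj ht htf) hw hS) => [->|/hiff]; first by constructor.
  by case=> [[-> _]|[-> _]]; constructor.
have neg1 : forall y, q < y -> (Sp a b c d).[y] < 0.
  move=> y hy; apply: (seed H (ltW hq) _ hy) => w hw.
  by apply/negP => /(Z w ltac:(lra)) [] ?; lra.
have pos1 : forall x, 0 < x < p -> 0 < (Sp a b c d).[x].
  move=> x /andP[x0 xp]; apply: sym_np => //; apply: neg1.
  by rewrite -e1; apply: phi_lt.
have nz : forall w, 0 < w < tbar -> w != p -> (Sp a b c d).[w] != 0.
  move=> w /andP[w0 wt] wp; apply/negP => /(Z w w0) [] e; [lra| |lra].
  by move: wp; rewrite e eqxx.
have [ch _] := change_pn H hG hp n1 f1 nz hp pt.
have neg2 := ch pos1.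
have pos2 : forall x, tbar < x < q -> 0 < (Sp a b c d).[x].
  move=> x /andP[tx xq]; apply: (sym_np H); first lra.
  apply: neg2; apply/andP; split.
    by rewrite -e2; apply: phi_lt => //; lra.
  by rewrite -htf; apply: phi_lt.
split.
  move=> nt; case: (ltgtP (t 0%N) tbar) => // h.
    apply: (conv_l hr hp e1).
    apply: (even_goto (l0 := 0) (r := tbar) H hr) => //; lra.
  apply: (conv_r hr hq e2).
  apply: (even_goto (l0 := tbar) (r := t 0%N + q + 1) H hr) => //; try lra.
  by move=> x /andP[hx _]; apply: neg1.
move=> e0; apply: conv_fix => //; exact: even_const.
Qed.

Lemma caseC (R : realType) (a b c d tbar : R) (t : nat -> R) : HYP a b c d ->
  no_even_mult_root (Gpoly a b c d) ->
  equilibrium (phi a b c d) tbar -> 0 < t 0%N -> (forall n, t n.+1 = phi a b c d (t n)) ->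
  forall p1 q1 p2 q2, p1 < p2 -> p2 < tbar -> tbar < q2 -> q2 < q1 ->
      (forall x y, two_cycle (phi a b c d) x y <->
                   same_cycle p1 q1 x y \/ same_cycle p2 q2 x y) ->
      [/\ (p2 < t 0%N < q2 -> t @ \oo --> tbar),
          (t 0%N = p2 \/ t 0%N = q2 -> conv_cycle t p2 q2) &
          (~ (p2 <= t 0%N <= q2) -> conv_cycle t p1 q1)].
Proof.
move=> H hG [ht htf] h0 hr p1 q1 p2 q2 p12 p2t tq2 q21 hiff.
have c1 : two_cycle (phi a b c d) p1 q1 by apply/hiff; left; left.
have c2 : two_cycle (phi a b c d) p2 q2 by apply/hiff; right; left.
have [hp1 hq1 e1 e1' [n1 n1' f1 f1']] := cyc_facts c1.
have [hp2 hq2 e2 e2' [n2 n2' f2 f2']] := cyc_facts c2.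
have ftb : phi a b c d (phi a b c d tbar) = tbar by rewrite !htf.
have Z : forall w, 0 < w -> (Sp a b c d).[w] == 0 ->
    w = tbar \/ w = p1 \/ w = q1 \/ w = p2 \/ w = q2.
  move=> w hw hS; case: (zero_char H (conj ht htf) hw hS) => [->|/hiff]; first by left.
  by case=> [[[-> _]|[-> _]]|[[-> _]|[-> _]]]; intuition.
have neg1 : forall y, q1 < y -> (Sp a b c d).[y] < 0.
  move=> y hy; apply: (seed H (ltW hq1) _ hy) => w hw.
  by apply/negP => /(Z w (lt_trans hq1 hw)) [e|[e|[e|[e|e]]]]; clear -e hw p12 p2t tq2 q21; lra.
have pos1 : forall x, 0 < x < p1 -> 0 < (Sp a b c d).[x].
  move=> x /andP[x0 xp]; apply: (sym_np H) => //; apply: neg1.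
  by rewrite -e1; apply: phi_lt.
have nz1 : forall w, 0 < w < p2 -> w != p1 -> (Sp a b c d).[w] != 0.
  move=> w /andP[w0 wt] wp; apply/negP => /(Z w w0) [e|[e|[e|[e|e]]]]; clear -e w0 wt p12 p2t tq2 q21 hp1 ht wp; (try lra);
  by rewrite e eqxx in wp.
have [ch1 _] := change_pn H hG hp1 n1 f1 nz1 hp1 p12.
have neg2 := ch1 pos1.
have nz2 : forall w, p1 < w < tbar -> w != p2 -> (Sp a b c d).[w] != 0.
  move=> w /andP[w0 wt] wp; apply/negP => /(Z w (lt_trans hp1 w0)) [e|[e|[e|[e|e]]]]; clear -e w0 wt p12 p2t tq2 q21 hp1 ht wp; (try lra);
  by rewrite e eqxx in wp.
have [_ ch2] := change_pn H hG hp2 n2 f2 nz2 p12 p2t.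
have pos3 := ch2 neg2.
have pos4 : forall x, q2 < x < q1 -> 0 < (Sp a b c d).[x].
  move=> x /andP[tx xq]; apply: (sym_np H); first lra.
  apply: neg2; apply/andP; split.
    by rewrite -e1'; apply: phi_lt => //; lra.
  by rewrite -e2'; apply: phi_lt => //; lra.
have neg5 : forall x, tbar < x < q2 -> (Sp a b c d).[x] < 0.
  move=> x /andP[tx xq]; apply: (sym_pn H); first lra.
  apply: pos3; apply/andP; split.
    by rewrite -e2'; apply: phi_lt => //; lra.
  by rewrite -htf; apply: phi_lt.
split.
- move=> /andP[h1 h2]; apply: conv_fix => //.
  by apply: (even_goto (l0 := p2) (r := q2) H hr) => //; lra.
- case=> e0.
    by apply: (conv_l hr hp2 e2); apply: even_const.
  by apply: (conv_r hr hq2 e2'); apply: even_const.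
move=> hn; case: (ltP (t 0%N) p2) => h.
  apply: (conv_l hr hp1 e1).
  by apply: (even_goto (l0 := 0) (r := p2) H hr) => //; lra.
have h' : q2 < t 0%N by rewrite ltNge; apply/negP => h2; apply: hn; rewrite h h2.
apply: (conv_r hr hq1 e1').
apply: (even_goto (l0 := q2) (r := t 0%N + q1 + 1) H hr) => //; try lra.
by move=> x /andP[hx _]; apply: neg1.
Qed.

Lemma caseD (R : realType) (a b c d tbar : R) (t : nat -> R) : HYP a b c d ->
  no_even_mult_root (Gpoly a b c d) ->
  equilibrium (phi a b c d) tbar -> 0 < t 0%N -> (forall n, t n.+1 = phi a b c d (t n)) ->
  forall p1 q1 p2 q2 p3 q3, p1 < p2 -> p2 < p3 -> p3 < tbar ->
      tbar < q3 -> q3 < q2 -> q2 < q1 ->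
      (forall x y, two_cycle (phi a b c d) x y <->
         [\/ same_cycle p1 q1 x y, same_cycle p2 q2 x y | same_cycle p3 q3 x y]) ->
      [/\ (p2 < t 0%N < q2 -> t 0%N <> tbar -> conv_cycle t p3 q3),
          (t 0%N = tbar -> t @ \oo --> tbar),
          (t 0%N = p2 \/ t 0%N = q2 -> conv_cycle t p2 q2) &
          (~ (p2 <= t 0%N <= q2) -> conv_cycle t p1 q1)].
Proof.
move=> H hG [ht htf] h0 hr p1 q1 p2 q2 p3 q3 p12 p23 p3t tq3 q32 q21 hiff.
have c1 : two_cycle (phi a b c d) p1 q1 by apply/hiff; constructor 1; left.
have c2 : two_cycle (phi a b c d) p2 q2 by apply/hiff; constructor 2; left.
have c3 : two_cycle (phi a b c d) p3 q3 by apply/hiff; constructor 3; left.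
have [hp1 hq1 e1 e1' [n1 n1' f1 f1']] := cyc_facts c1.
have [hp2 hq2 e2 e2' [n2 n2' f2 f2']] := cyc_facts c2.
have [hp3 hq3 e3 e3' [n3 n3' f3 f3']] := cyc_facts c3.
have ftb : phi a b c d (phi a b c d tbar) = tbar by rewrite !htf.
have Z : forall w, 0 < w -> (Sp a b c d).[w] == 0 ->
    w = tbar \/ w = p1 \/ w = q1 \/ w = p2 \/ w = q2 \/ w = p3 \/ w = q3.
  move=> w hw hS; case: (zero_char H (conj ht htf) hw hS) => [->|/hiff]; first by left.
  case=> [[[-> _]|[-> _]]|[[-> _]|[-> _]]|[[-> _]|[-> _]]].
  - by right; left.
  - by right; right; left.
  - by right; right; right; left.
  - by right; right; right; right; left.
  - by right; right; right; right; right; left.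
  - by right; right; right; right; right; right.
have neg1 : forall y, q1 < y -> (Sp a b c d).[y] < 0.
  move=> y hy; apply: (seed H (ltW hq1) _ hy) => w hw.
  by apply/negP => /(Z w (lt_trans hq1 hw)) [e|[e|[e|[e|[e|[e|e]]]]]]; clear -e hw p12 p23 p3t tq3 q32 q21; lra.
have pos1 : forall x, 0 < x < p1 -> 0 < (Sp a b c d).[x].
  move=> x /andP[x0 xp]; apply: (sym_np H) => //; apply: neg1.
  by rewrite -e1; apply: phi_lt.
have nz1 : forall w, 0 < w < p2 -> w != p1 -> (Sp a b c d).[w] != 0.
  move=> w /andP[w0 wt] wp; apply/negP => /(Z w w0) [e|[e|[e|[e|[e|[e|e]]]]]]; clear -e w0 wt p12 p23 p3t tq3 q32 q21 hp1 ht wp; (try lra);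
  by rewrite e eqxx in wp.
have [ch1 _] := change_pn H hG hp1 n1 f1 nz1 hp1 p12.
have neg2 := ch1 pos1.
have nz2 : forall w, p1 < w < p3 -> w != p2 -> (Sp a b c d).[w] != 0.
  move=> w /andP[w0 wt] wp; apply/negP => /(Z w (lt_trans hp1 w0)) [e|[e|[e|[e|[e|[e|e]]]]]]; clear -e w0 wt p12 p23 p3t tq3 q32 q21 hp1 ht wp; (try lra);
  by rewrite e eqxx in wp.
have [_ ch2] := change_pn H hG hp2 n2 f2 nz2 p12 p23.
have pos3 := ch2 neg2.
have nz3 : forall w, p2 < w < tbar -> w != p3 -> (Sp a b c d).[w] != 0.
  move=> w /andP[w0 wt] wp; apply/negP => /(Z w (lt_trans hp2 w0)) [e|[e|[e|[e|[e|[e|e]]]]]]; clear -e w0 wt p12 p23 p3t tq3 q32 q21 hp1 ht wp; (try lra);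
  by rewrite e eqxx in wp.
have [ch3 _] := change_pn H hG hp3 n3 f3 nz3 p23 p3t.
have neg4 := ch3 pos3.
have pos5 : forall x, tbar < x < q3 -> 0 < (Sp a b c d).[x].
  move=> x /andP[tx xq]; apply: (sym_np H); first lra.
  apply: neg4; apply/andP; split.
    by rewrite -e3'; apply: phi_lt => //; lra.
  by rewrite -htf; apply: phi_lt.
have neg6 : forall x, q3 < x < q2 -> (Sp a b c d).[x] < 0.
  move=> x /andP[tx xq]; apply: (sym_pn H); first lra.
  apply: pos3; apply/andP; split.
    by rewrite -e2'; apply: phi_lt => //; lra.
  by rewrite -e3'; apply: phi_lt => //; lra.
have pos7 : forall x, q2 < x < q1 -> 0 < (Sp a b c d).[x].
  move=> x /andP[tx xq]; apply: (sym_np H); first lra.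
  apply: neg2; apply/andP; split.
    by rewrite -e1'; apply: phi_lt => //; lra.
  by rewrite -e2'; apply: phi_lt => //; lra.
split.
- move=> /andP[h1 h2] nt; case: (ltgtP (t 0%N) tbar) => // h.
    apply: (conv_l hr hp3 e3).
    by apply: (even_goto (l0 := p2) (r := tbar) H hr) => //; lra.
  apply: (conv_r hr hq3 e3').
  by apply: (even_goto (l0 := tbar) (r := q2) H hr) => //; lra.
- by move=> e0; apply: conv_fix => //; apply: even_const.
- case=> e0.
    by apply: (conv_l hr hp2 e2); apply: even_const.
  by apply: (conv_r hr hq2 e2'); apply: even_const.
move=> hn; case: (ltP (t 0%N) p2) => h.
  apply: (conv_l hr hp1 e1).
  by apply: (even_goto (l0 := 0) (r := p2) H hr) => //; lra.
have h' : q2 < t 0%N by rewrite ltNge; apply/negP => h2; apply: hn; rewrite h h2.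
apply: (conv_r hr hq1 e1').
apply: (even_goto (l0 := q2) (r := t 0%N + q1 + 1) H hr) => //; try lra.
by move=> x /andP[hx _]; apply: neg1.
Qed.

Theorem theorem4 (R : realType) (a b c d tbar : R) (t : nat -> R) :
  0 < a -> 0 < b -> 0 < d -> - Num.sqrt (3 * b * d) <= c ->
  equilibrium (phi a b c d) tbar ->
  0 < t 0%N -> (forall n, t n.+1 = phi a b c d (t n)) ->
  no_even_mult_root (Gpoly a b c d) ->
  [/\
   (* (a) *)
   ((forall p q, ~ two_cycle (phi a b c d) p q) -> t @ \oo --> tbar),
   (* (b) *)
   (forall p q, p < tbar < q ->
      (forall x y, two_cycle (phi a b c d) x y <-> same_cycle p q x y) ->
      (t 0%N <> tbar -> conv_cycle t p q) /\ (t 0%N = tbar -> t @ \oo --> tbar)),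
   (* (c) *)
   (forall p1 q1 p2 q2, p1 < p2 -> p2 < tbar -> tbar < q2 -> q2 < q1 ->
      (forall x y, two_cycle (phi a b c d) x y <->
                   same_cycle p1 q1 x y \/ same_cycle p2 q2 x y) ->
      [/\ (p2 < t 0%N < q2 -> t @ \oo --> tbar),
          (t 0%N = p2 \/ t 0%N = q2 -> conv_cycle t p2 q2) &
          (~ (p2 <= t 0%N <= q2) -> conv_cycle t p1 q1)]) &
   (* (d) *)
   (forall p1 q1 p2 q2 p3 q3, p1 < p2 -> p2 < p3 -> p3 < tbar ->
      tbar < q3 -> q3 < q2 -> q2 < q1 ->
      (forall x y, two_cycle (phi a b c d) x y <->
         [\/ same_cycle p1 q1 x y, same_cycle p2 q2 x y | same_cycle p3 q3 x y]) ->
      [/\ (p2 < t 0%N < q2 -> t 0%N <> tbar -> conv_cycle t p3 q3),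
          (t 0%N = tbar -> t @ \oo --> tbar),
          (t 0%N = p2 \/ t 0%N = q2 -> conv_cycle t p2 q2) &
          (~ (p2 <= t 0%N <= q2) -> conv_cycle t p1 q1)])].
Proof.
move=> ha hb hd hc heq h0 hr hG.
have H : HYP a b c d by split => //; exact: hc2.
split.
- exact: caseA H heq h0 hr.
- exact: caseB H hG heq h0 hr.
- exact: caseC H hG heq h0 hr.
- exact: caseD H hG heq h0 hr.
Qed.
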